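(* For a positive integer $g$, let $t_g$ denote the number of numerical semigroups $\Lambda$ of genus $g$ satisfying $f(\Lambda)<3m(\Lambda)$. Then for every positive integer $g$, \[ t_g \leq F_{g+1} + \sum_{k = 1}^{g-1} \sum_{A \in \mathcal A_k} F_{g - |(A + A)\cap[0, k]| + |A| - k - 1}. \]
   Context: A numerical semigroup is a subset $\Lambda\subseteq\mathbb{N}_0$ closed under addition, containing $0$, with finite complement in $\mathbb{N}_0$. Its genus is $|\mathbb{N}_0\setminus\Lambda|$, its multiplicity $m(\Lambda)$ is its smallest nonzero element and its Frobenius number $f(\Lambda)$ is the largest element of $\mathbb{N}_0\setminus\Lambda$. For integers $a\le b$, $[a,b]=\{a,\dots,b\}$; $A+A=\{a_1+a_2:a_1,a_2\in A\}$. For a positive integer $k$, $\mathcal A_k = \{A \subseteq [0, k-1] : 0 \in A \text{ and } k \notin A + A\}$. $F_n$ are the Fibonacci numbers, $F_1=F_2=1$, $F_{n+2}=F_{n+1}+F_n$, with the convention $F_n=0$ for all $n\le 0$. *)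

(* Defs.v *)
From mathcomp Require Import all_boot all_order all_algebra.
Set Implicit Arguments. Unset Strict Implicit. Unset Printing Implicit Defensive.

Definition numerical_semigroup (L : nat -> bool) : Prop :=
  [/\ L 0, (forall a b, L a -> L b -> L (a + b)) & exists N, forall n, N <= n -> L n].

Definition has_genus (L : nat -> bool) (g : nat) : Prop :=
  exists s : seq nat, [/\ uniq s, (forall n, (n \in s) = ~~ L n) & size s = g].

Definition is_multiplicity (L : nat -> bool) (m : nat) : Prop :=
  [/\ 0 < m, L m & forall k, 0 < k < m -> ~~ L k].

Definition is_frobenius (L : nat -> bool) (f : nat) : Prop :=
  ~~ L f /\ forall n, f < n -> L n.

Fixpoint fib (n : nat) : nat :=
  match n with
  | 0 => 0
  | 1 => 1
  | (m.+1 as p).+1 => fib p + fib m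
  end.

(* F_n for integer index, with F_n = 0 for n <= 0 *)
Definition fibz (z : int) : nat :=
  match z with Posz n => fib n | Negz _ => 0 end.

Definition in_sumset (k : nat) (A : {set 'I_k}) (s : nat) : bool :=
  [exists a1 in A, exists a2 in A, (val a1 + val a2 == s)%N].

(* A in cal A_k  (A subset of [0,k-1] encoded as a set of 'I_k) *)
Definition in_calA (k : nat) (A : {set 'I_k}) : bool :=
  [exists a in A, val a == 0%N] && ~~ in_sumset A k.

Definition sumset_card (k : nat) (A : {set 'I_k}) : nat :=
  #|[set s : 'I_k.+1 | in_sumset A (val s)]|.

Definition bound_rhs (g : nat) : nat :=
  (fib g.+1 + \sum_(1 <= k < g) \sum_(A : {set 'I_k} | in_calA A)
     fibz ((g%:Z - (sumset_card A)%:Z + (#|A|)%:Z - k%:Z - 1)%R))%N.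

(* Main.v *)
Require Import Defs.
From mathcomp Require Import all_boot all_order all_algebra.
From mathcomp Require Import zify.
From Stdlib Require Import FunctionalExtensionality ClassicalEpsilon.
Set Implicit Arguments. Unset Strict Implicit. Unset Printing Implicit Defensive.

Definition Tsum (M : nat) := \sum_(i < M.+1) 'C(i, M - i).

Lemma Tsum_rec M : Tsum M.+2 = Tsum M.+1 + Tsum M.
Proof.
rewrite /Tsum big_ord_recl /= bin0n /= add0n.
rewrite big_ord_recr /= subnn bin0 /=.
rewrite [X in _ = X + _]big_ord_recr /= subnn bin0.
have -> : \sum_(i < M.+1) 'C(bump 0 i, M.+2 - bump 0 i)
  = \sum_(i < M.+1) 'C(i, M.+1 - i) + \sum_(i < M.+1) 'C(i, M - i).
  rewrite -big_split /=; apply: eq_bigr => i _.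
  have hi := ltn_ord i.
  rewrite /bump /= add1n subSS subSn // binS subSn //.
by rewrite addnAC.
Qed.

Lemma Tsum_fib M : Tsum M = fib M.+1.
Proof.
suff: Tsum M = fib M.+1 /\ Tsum M.+1 = fib M.+2 by case.
elim: M => [|M [IH1 IH2]]; first by split; rewrite /Tsum ?big_ord_recr ?big_ord0 /=.
split=> //; rewrite Tsum_rec IH1 IH2 /=; lia.
Qed.

Lemma fib_sum_le M B : \sum_(i < B) 'C(i, M - i) * (i <= M) <= fib M.+1.
Proof.
rewrite -Tsum_fib /Tsum.
rewrite -(big_mkord xpredT (fun i => 'C(i, M - i) * (i <= M))).
rewrite -(big_mkord xpredT (fun i => 'C(i, M - i))).
have h1 : \sum_(0 <= i < B) 'C(i, M - i) * (i <= M)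
   <= \sum_(0 <= i < B + M.+1) 'C(i, M - i) * (i <= M).
  rewrite [X in _ <= X](big_cat_nat _ (n := B)) //= ?leq_addr //.
apply: (leq_trans h1).
rewrite addnC [X in X <= _](big_cat_nat _ (n := M.+1)) //= ?leq_addr //.
rewrite [X in _ + X <= _]big1_seq ?addn0; last first.
  move=> i /andP [_]; rewrite mem_index_iota => /andP [hi _].
  by rewrite leqNgt hi muln0.
apply: leq_sum => i _; by case: (i <= M); rewrite ?muln1 ?muln0.
Qed.
Lemma shift_sum (h : nat -> nat) s B :
  \sum_(m < B) (s < m) * h (m.-1 - s) <= \sum_(i < B) h i.
Proof.
elim: s B => [|s IH] [|B]; rewrite ?big_ord0 // big_ord_recl /= mul0n add0n.
- rewrite [X in _ <= X]big_ord_recr /=.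
  apply: leq_trans (leq_addr _ _).
  apply: eq_leq; apply: eq_bigr => i _; by rewrite add0n subn0 mul1n.
- rewrite [X in _ <= X]big_ord_recr /=.
  apply: leq_trans (leq_addr _ _).
  apply: leq_trans (IH B).
  apply: eq_leq; apply: eq_bigr => i _; rewrite add0n /bump /= add1n ltnS.
  by congr (_ * h _); lia.
Qed.

Lemma card_part_nat (T : finType) (P : {set T}) (h : T -> nat) B :
  (forall x, x \in P -> h x < B) ->
  #|P| = \sum_(j < B) #|[set x in P | h x == j]|.
Proof.
move=> hB.
rewrite -sum1_card.
under [RHS]eq_bigr => j _ do rewrite -sum1_card.
rewrite (exchange_big_dep (fun x => x \in P)) /=; last first.
  by move=> j x _; rewrite inE => /andP [].
apply: eq_bigr => x xP.
rewrite (bigD1 (Ordinal (hB x xP))) /=; last by rewrite inE xP eqxx.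
rewrite big1 ?addn0 // => j /andP [hj hne]; move: hj; rewrite inE xP /= => /eqP e.
case/eqP: hne; apply: val_inj; by rewrite /= e.
Qed.

Lemma card_part (T J : finType) (P : {set T}) (h : T -> J) :
  #|P| = \sum_(j : J) #|[set x in P | h x == j]|.
Proof.
rewrite -sum1_card.
under [RHS]eq_bigr => j _ do rewrite -sum1_card.
rewrite (exchange_big_dep (fun x => x \in P)) /=; last first.
  by move=> j x _; rewrite inE => /andP [].
apply: eq_bigr => x xP.
rewrite (bigD1 (h x)) /=; last by rewrite inE xP eqxx.
rewrite big1 ?addn0 // => j /andP [hj hne]; move: hj; rewrite inE xP /= => /eqP e.
by case/eqP: hne.
Qed.

Lemma cardsU_disj (T : finType) (A B : {set T}) :
  (forall x, x \in A -> x \notin B) -> #|A :|: B| = #|A| + #|B|.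
Proof.
move=> h; rewrite cardsU.
suff -> : A :&: B = set0 by rewrite cards0 subn0.
apply/setP => x; rewrite !inE; case xA: (x \in A) => //=.
by rewrite (negbTE (h x xA)).
Qed.

Definition win (N a l : nat) (p : nat -> bool) : {set 'I_N} :=
  [set x : 'I_N | (a <= x < a + l) && p (x - a)].

Lemma win_card N a l p : a + l <= N -> #|win N a l p| = \sum_(j < l) p j.
Proof.
move=> hle.
pose f := fun j : 'I_l => widen_ord hle (rshift a j).
have -> : win N a l p = f @: [set j : 'I_l | p j].
  apply/setP => x; rewrite inE; apply/andP/imsetP.
    move=> [/andP [h1 h2] h3].
    have hx : x - a < l by lia.
    exists (Ordinal hx); first by rewrite inE.
    apply: val_inj => /=; lia.
  move=> [j]; rewrite inE => pj ->; rewrite /= addKn pj; split => //.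
  have := ltn_ord j; lia.
rewrite card_imset; last first.
  move=> j j' /(congr1 val) /= /addnI e; exact: val_inj.
rewrite -sum1_card big_mkcond /=; apply: eq_bigr => j _; rewrite inE.
by case: (p j).
Qed.
Lemma classcount n N g (G : 'I_n -> {set 'I_N}) (C : {set 'I_n}) (Fx W : {set 'I_N}) :
  injective G -> (forall i, #|G i| = g) ->
  (forall x, x \in Fx -> x \notin W) ->
  (forall i, i \in C -> Fx \subset G i /\ G i \subset Fx :|: W) ->
  #|C| <= 'C(#|W|, g - #|Fx|) * (#|Fx| <= g).
Proof.
move=> Ginj Gc dFW H.
case: (set_0Vmem C) => [->|[i0 i0C]]; first by rewrite cards0.
have hFx : #|Fx| <= g.
  rewrite -(Gc i0); apply: subset_leq_card; by case: (H i0 i0C).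
rewrite hFx muln1.
have key : forall i, i \in C -> G i = Fx :|: (G i :&: W).
  move=> i iC; case: (H i iC) => /subsetP h1 /subsetP h2.
  apply/setP => x; rewrite !inE.
  case xF: (x \in Fx); first by rewrite (h1 x xF).
  case xG: (x \in G i) => //=.
  by move: (h2 x xG); rewrite !inE xF.
have ch : forall i, i \in C -> #|G i :&: W| = g - #|Fx|.
  move=> i iC; have := Gc i; rewrite {1}(key i iC) cardsU_disj.
    lia.
  by move=> x /dFW; rewrite inE negb_and => ->; rewrite orbT.
rewrite -(card_in_imset (f := fun i => G i :&: W)); last first.
  move=> i j iC jC /= e; apply: Ginj; by rewrite (key i iC) (key j jC) e.
rewrite -cards_draws; apply: subset_leq_card; apply/subsetP => Y /imsetP [i iC ->].
by rewrite inE subsetIr ch //=.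
Qed.

Definition pT : nat -> bool := fun _ => true.
Definition inA k (A : {set 'I_k}) (j : nat) := [exists a in A, val a == j].
Definition Aset k (L : nat -> bool) m : {set 'I_k} := [set a : 'I_k | L (m + a)].

Lemma inA_Aset k L m j : inA (Aset k L m) j = (j < k) && L (m + j).
Proof.
apply/existsP/andP.
  move=> [a /andP [aA /eqP <-]]; split; first exact: ltn_ord.
  by move: aA; rewrite inE.
move=> [hj hL]; exists (Ordinal hj); by rewrite inE /= hL eqxx.
Qed.

Lemma sumset_Aset k (L : nat -> bool) m j :
  (forall a b, L a -> L b -> L (a + b)) ->
  in_sumset (Aset k L m) j -> L (m + m + j).
Proof.
move=> Lc /existsP [a1 /andP [a1A /existsP [a2 /andP [a2A /eqP e]]]].
move: a1A a2A; rewrite !inE => h1 h2.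
rewrite -e addnACA.
exact: Lc.
Qed.

Lemma win_in N a l p (x : 'I_N) : (x \in win N a l p) = (a <= x < a + l) && p (x - a).
Proof. by rewrite inE. Qed.

Lemma case1_incl N L m f :
  numerical_semigroup L -> is_multiplicity L m -> is_frobenius L f -> f < 2 * m ->
  win N 1 m.-1 pT \subset [set x : 'I_N | ~~ L x] /\
  [set x : 'I_N | ~~ L x] \subset win N 1 m.-1 pT :|: win N m.+1 m.-1 pT.
Proof.
move=> [L0 Lc _] [m0 Lm Lsm] [Lf Lgf] hf; split; apply/subsetP => x.
  rewrite win_in inE => /andP [h _]; apply: Lsm; lia.
rewrite inE => gx; rewrite inE !win_in /pT !andbT.
have x0 : x != 0 :> nat by apply: contraNneq gx => ->.
have xm : x != m :> nat by apply: contraNneq gx => ->.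
have xf : x <= f by rewrite leqNgt; apply: contra gx => /Lgf.
lia.
Qed.

Definition Fx2 N m k (A : {set 'I_k}) : {set 'I_N} :=
  win N 1 m.-1 pT :|: win N m k (fun j => ~~ inA A j) :|: win N (m+k) 1 pT
  :|: win N (m+m+k) 1 pT.
Definition W2 N m k (A : {set 'I_k}) : {set 'I_N} :=
  win N (m+k).+1 (m.-1 - k) pT :|: win N (m+m) k (fun j => ~~ in_sumset A j).

Lemma case2_incl N L m f k :
  numerical_semigroup L -> is_multiplicity L m -> is_frobenius L f ->
  f = m + m + k -> k < m ->
  Fx2 N m (Aset k L m) \subset [set x : 'I_N | ~~ L x] /\
  [set x : 'I_N | ~~ L x] \subset Fx2 N m (Aset k L m) :|: W2 N m (Aset k L m).
Proof.
move=> [L0 Lc _] [m0 Lm Lsm] [Lf Lgf] ef hk.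
have Lmk : ~~ L (m + k).
  apply: contra Lf => h; rewrite ef -addnA; exact: Lc.
split; apply/subsetP => x.
  rewrite !inE /pT !andbT inA_Aset.
  case/orP => [/orP [/orP [h|/andP [h1 h2]]|h]|h].
  - apply: Lsm; lia.
  - move: h2; rewrite negb_and; case/orP; first lia.
    by have -> : m + (x - m) = x by lia.
  - by have -> : x = m + k :> nat by lia.
  - by have -> : x = f :> nat by lia.
rewrite inE => gx; rewrite !inE /pT !andbT inA_Aset.
have x0 : x != 0 :> nat by apply: contraNneq gx => ->.
have xm : x != m :> nat by apply: contraNneq gx => ->.
have x2m : x != m + m :> nat by apply: contraNneq gx => ->; exact: Lc.
have xf : x <= f by rewrite leqNgt; apply: contra gx => /Lgf.
have F1 : L (m + (x - m)) -> x < m.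
  move=> h; rewrite ltnNge; apply/negP => hx; move: h.
  have -> : m + (x - m) = x by lia. by apply/negP.
have F2 : in_sumset (Aset k L m) (x - (m + m)) -> x < m + m.
  move=> /(sumset_Aset Lc) h; rewrite ltnNge; apply/negP => hx; move: h.
  have -> : m + m + (x - (m + m)) = x by lia. by apply/negP.
move: F1 F2; case: (L (m + (x - m))); case: (in_sumset _ _) => F1 F2;
  try move: (F1 isT); try move: (F2 isT); rewrite /=; lia.
Qed.

Lemma sum_pT l : \sum_(j < l) pT j = l.
Proof. by rewrite /pT /= sum_nat_const card_ord muln1. Qed.

Lemma sum_notinA k (A : {set 'I_k}) : \sum_(j < k) ~~ inA A j = k - #|A|.
Proof.
have -> : \sum_(j < k) ~~ inA A j = #|~: A|.
  rewrite -sum1_card [RHS]big_mkcond /=; apply: eq_bigr => j _.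
  have -> : inA A j = (j \in A).
    apply/existsP/idP => [[a /andP [aA /eqP e]]|jA].
      by have <- : a = j by apply: val_inj.
    by exists j; rewrite jA eqxx.
  by rewrite inE; case: (j \in A).
by rewrite cardsCs setCK card_ord.
Qed.

Lemma sumset_card_sum k (A : {set 'I_k}) : ~~ in_sumset A k ->
  sumset_card A = \sum_(j < k) in_sumset A j.
Proof.
move=> hk; rewrite /sumset_card -sum1_card big_mkcond /= big_ord_recr /=.
rewrite inE (negbTE hk) addn0; apply: eq_bigr => j _; rewrite inE /=.
by case: (in_sumset A j).
Qed.

Lemma sum_bool_le k (p : nat -> bool) : \sum_(j < k) p j <= k.
Proof.
apply: (@leq_trans (\sum_(j < k) 1)); first by apply: leq_sum => j _; exact: leq_b1.
by rewrite sum_nat_const card_ord muln1.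
Qed.

Lemma sum_neg k (p : nat -> bool) : \sum_(j < k) ~~ p j = k - \sum_(j < k) p j.
Proof.
have : \sum_(j < k) ~~ p j + \sum_(j < k) p j = k.
  rewrite -big_split /= (eq_bigr (fun _ => 1)); last by move=> j _; case: (p j).
  by rewrite sum_nat_const card_ord muln1.
lia.
Qed.

Lemma card_Fx1 N m : m < N -> #|win N 1 m.-1 pT| = m.-1.
Proof. move=> h; rewrite win_card ?sum_pT //; lia. Qed.

Lemma card_W1 N m : m.+1 + m.-1 <= N -> #|win N m.+1 m.-1 pT| = m.-1.
Proof. move=> h; by rewrite win_card ?sum_pT. Qed.

Lemma card_Fx2 N m k (A : {set 'I_k}) : 0 < m -> m + m + k + 1 <= N ->
  #|Fx2 N m A| = m.-1 + (k - #|A|) + 1 + 1.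
Proof.
move=> m0 hN; rewrite /Fx2.
rewrite cardsU_disj; last by move=> x; rewrite !inE; lia.
rewrite cardsU_disj; last by move=> x; rewrite !inE; lia.
rewrite cardsU_disj; last by move=> x; rewrite !inE; lia.
rewrite !win_card ?sum_pT ?sum_notinA //; lia.
Qed.

Lemma card_W2 N m k (A : {set 'I_k}) : ~~ in_sumset A k -> k < m -> m + m + k <= N ->
  #|W2 N m A| <= m.-1 - sumset_card A.
Proof.
move=> hs hk hN; rewrite /W2.
apply: leq_trans (leq_card_setU _ _) _.
rewrite !win_card ?sum_pT ?sum_neg; try lia.
rewrite sumset_card_sum //.
have := sum_bool_le k (in_sumset A); lia.
Qed.

Lemma disj_FW N m k (A : {set 'I_k}) (x : 'I_N) : k < m ->
  x \in Fx2 N m A -> x \notin W2 N m A.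
Proof.
move=> hk; rewrite !inE /pT.
case: (inA _ _); case: (in_sumset _ _); rewrite /=; lia.
Qed.

Lemma mult_le L g m : has_genus L g -> is_multiplicity L m -> m <= g.+1.
Proof.
move=> [s [us hs ss]] [m0 Lm Lsm].
have : size (iota 1 m.-1) <= size s.
  apply: uniq_leq_size; first exact: iota_uniq.
  move=> x; rewrite mem_iota hs => hx; apply: Lsm; lia.
rewrite size_iota ss; lia.
Qed.

Lemma gap_card L g N : has_genus L g -> (forall x, ~~ L x -> x < N) ->
  #|[set x : 'I_N | ~~ L x]| = g.
Proof.
move=> [s [us hs ss]] hN.
rewrite -ss cardE -(size_map (@nat_of_ord N)).
apply: perm_size; apply: uniq_perm.
- rewrite map_inj_uniq ?enum_uniq //; exact: val_inj.
- exact: us.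
move=> x; rewrite hs; apply/mapP/idP.
  by move=> [y]; rewrite mem_enum inE => hy ->.
move=> hx; exists (Ordinal (hN x hx)) => //; by rewrite mem_enum inE.
Qed.

Lemma arith g k a s : a <= k -> s <= k ->
  \sum_(m < g.+2) (k < m) * ('C(m.-1 - s, g - (m.-1 + (k - a) + 1 + 1))
      * (m.-1 + (k - a) + 1 + 1 <= g))
  <= fibz (g%:Z - s%:Z + a%:Z - k%:Z - 1)%R.
Proof.
move=> ha hs.
case: (leqP (k + k + 2) (g + a)) => hc; last first.
  rewrite big1 // => m _.
  have [km|km] := ltnP k m; last by rewrite mul0n.
  have -> : (m.-1 + (k - a) + 1 + 1 <= g) = false by lia.
  by rewrite !muln0.
pose M := g + a - (s + k + 2).
have -> : (g%:Z - s%:Z + a%:Z - k%:Z - 1 = (M.+1)%:Z)%R by rewrite /M; lia.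
rewrite /=.
apply: leq_trans (fib_sum_le M g.+2).
apply: leq_trans (shift_sum (fun i => 'C(i, M - i) * (i <= M)) s g.+2).
apply: leq_sum => m _.
have [km|km] := ltnP k m; last by rewrite mul0n.
have -> : s < m by lia.
rewrite !mul1n.
have [hcf|hcf] := boolP (m.-1 + (k - a) + 1 + 1 <= g); last by rewrite muln0.
have -> : m.-1 - s <= M by rewrite /M; lia.
have -> : g - (m.-1 + (k - a) + 1 + 1) = M - (m.-1 - s) by rewrite /M; lia.
by [].
Qed.

Lemma main g (hg : 0 < g) n (S : 'I_n -> nat -> bool) (Mu Fr : 'I_n -> nat) :
  injective S -> (forall i, numerical_semigroup (S i)) -> (forall i, has_genus (S i) g) ->
  (forall i, is_multiplicity (S i) (Mu i)) -> (forall i, is_frobenius (S i) (Fr i)) ->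
  (forall i, Fr i < 3 * Mu i) -> n <= bound_rhs g.
Proof.
move=> Sinj hS hG hM hF h3.
pose N := 3 * g.+1.
have mle : forall i, Mu i <= g.+1 by move=> i; exact: mult_le (hG i) (hM i).
have gapN : forall i x, ~~ S i x -> x < N.
  move=> i x hx; have hxf : x <= Fr i.
    by rewrite leqNgt; apply: contra hx; case: (hF i) => _; apply.
  have := h3 i; have := mle i; rewrite /N; lia.
pose G i : {set 'I_N} := [set x : 'I_N | ~~ S i x].
have Gc : forall i, #|G i| = g by move=> i; apply: gap_card (hG i) (gapN i).
have Ginj : injective G.
  move=> i j e; apply: Sinj; apply: functional_extensionality => x.
  have [hx|hx] := ltnP x N.
    have := congr1 (fun X : {set 'I_N} => Ordinal hx \in X) e; rewrite /= !inE.
    exact: negb_inj.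
  have hi : S i x by apply/negPn/negP => /gapN; lia.
  have hj : S j x by apply/negPn/negP => /gapN; lia.
  by rewrite hi hj.
pose c1 i := Fr i < 2 * Mu i.
have -> : n = #|[set i | c1 i]| + #|[set i | ~~ c1 i]|.
  rewrite -[n in LHS]card_ord -(cardsC [set i | c1 i]); congr (_ + _).
  by apply: eq_card => i; rewrite !inE.
rewrite /bound_rhs; apply: leq_add.
- rewrite (card_part_nat (h := Mu) (B := g.+2)); last by move=> i _; rewrite ltnS.
  apply: (@leq_trans (\sum_(m < g.+2) 'C(m.-1, g - m.-1) * (m.-1 <= g))).
    apply: leq_sum => m _.
    have hm := ltn_ord m.
    have := classcount (C := [set x in [set i | c1 i] | Mu x == m])
      (Fx := win N 1 m.-1 pT) (W := win N m.+1 m.-1 pT) Ginj Gc.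
    rewrite card_Fx1 ?card_W1; first last.
    + rewrite /N; lia.
    + rewrite /N; lia.
    apply.
      by move=> x; rewrite !inE; lia.
    move=> i; rewrite !inE => /andP [hc /eqP <-].
    exact: case1_incl (hS i) (hM i) (hF i) hc.
  rewrite big_ord_recl /= subn0 bin0n.
  have -> : (g == 0) = false by lia.
  rewrite add0n; apply: leq_trans (fib_sum_le g g.+1).
  apply: eq_leq; apply: eq_bigr => i _; by rewrite add0n.
have c2facts : forall i k, ~~ c1 i -> Fr i - 2 * Mu i = k ->
   [/\ 0 < k, k < Mu i, Fr i = Mu i + Mu i + k, in_calA (Aset k (S i) (Mu i)) & k < g].
  move=> i k hc hk.
  case: (hS i) => [L0 Lc _]; case: (hM i) => [m0 Lm _]; case: (hF i) => [Lf _].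
  have hne : Fr i != 2 * Mu i.
    apply: contraNneq Lf => ->; rewrite mul2n -addnn; exact: Lc.
  move: hc; rewrite /c1 -leqNgt => hc.
  have k0 : 0 < k by lia.
  have km : k < Mu i by have := h3 i; lia.
  have ef : Fr i = Mu i + Mu i + k by lia.
  have hA : in_calA (Aset k (S i) (Mu i)).
    apply/andP; split.
      apply/existsP; exists (Ordinal k0); by rewrite inE /= addn0 Lm eqxx.
    apply/negP => /(sumset_Aset Lc); rewrite -ef; exact/negP.
  split => //.
  have [inc _] := case2_incl N (hS i) (hM i) (hF i) ef km.
  have := subset_leq_card inc; rewrite -/(G i) Gc card_Fx2; last first.
  + have := mle i; rewrite /N; lia.
  + exact: m0.
  lia.
rewrite (card_part_nat (h := fun i => Fr i - 2 * Mu i) (B := g)); last first.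
  by move=> i; rewrite inE => hc; case: (c2facts i _ hc erefl).
rewrite -(big_mkord xpredT (fun k => #|[set x in [set i | ~~ c1 i] | Fr x - 2 * Mu x == k]|)).
rewrite (big_ltn hg).
rewrite (_ : #|[set x in [set i | ~~ c1 i] | Fr x - 2 * Mu x == 0]| = 0) ?add0n; last first.
  apply/eqP; rewrite cards_eq0; apply/eqP/setP => i; rewrite !inE.
  apply/negP => /andP [hc /eqP hk]; by case: (c2facts i _ hc hk).
apply: leq_sum => k _.
rewrite (@card_part _ _ _ (fun i => Aset k (S i) (Mu i))) [X in _ <= X]big_mkcond /=.
apply: leq_sum => A _.
rewrite (card_part_nat (h := Mu) (B := g.+2)); last by move=> i _; rewrite ltnS.
case hA: (in_calA A); last first.
  rewrite big1 // => m _; apply/eqP; rewrite cards_eq0; apply/eqP/setP => i; rewrite !inE.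
  apply/negP => /andP [/andP [/andP [hc /eqP hk] /eqP hA'] _].
  case: (c2facts i _ hc hk) => _ _ _; by rewrite hA' hA.
have hak : #|A| <= k by apply: leq_trans (max_card _) _; rewrite card_ord.
have hsk : sumset_card A <= k.
  move: hA => /andP [_ hnk]; rewrite sumset_card_sum //; exact: sum_bool_le.
apply: leq_trans (arith g hak hsk).
apply: leq_sum => m _.
set C := [set x in _ | Mu x == m].
case: (set_0Vmem C) => [->|[i0 hi0]]; first by rewrite cards0.
move: (hi0); rewrite !inE => /andP [/andP [/andP [hc /eqP hk] /eqP hA'] /eqP hm].
have [k0 km ef _ kg] := c2facts i0 _ hc hk.
have kmm : k < m by rewrite -hm.
rewrite kmm mul1n.
have m0 : 0 < (m : nat) by case: (hM i0); rewrite hm.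
have mN : m + m + k + 1 <= N by have := mle i0; rewrite /N hm; lia.
apply: leq_trans (classcount (C := C) (Fx := Fx2 N m A) (W := W2 N m A) Ginj Gc _ _) _.
- by move=> x; apply: disj_FW.
- move=> i; rewrite !inE => /andP [/andP [/andP [hc' /eqP hk'] /eqP hA''] /eqP hm'].
  have [_ km' ef' _ _] := c2facts i _ hc' hk'.
  rewrite -hA'' -hm'.
  exact: case2_incl (hS i) (hM i) (hF i) ef' km'.
rewrite card_Fx2 //.
apply: leq_mul => //; apply: leq_bin2l; apply: card_W2 => //.
- by move: hA => /andP [].
- lia.
Qed.

Theorem lemma3p9 (g : nat) (hg : 0 < g) :
  forall (n : nat) (S : 'I_n -> nat -> bool),
    injective S ->
    (forall i, numerical_semigroup (S i) /\ has_genus (S i) g /\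
       exists m f, [/\ is_multiplicity (S i) m, is_frobenius (S i) f & f < 3 * m]) ->
    n <= bound_rhs g.
Proof.
move=> n S Sinj H.
have H' : forall i, {p : nat * nat | [/\ is_multiplicity (S i) p.1,
    is_frobenius (S i) p.2 & p.2 < 3 * p.1]}.
  move=> i; apply: constructive_indefinite_description.
  case: (H i) => _ [_ [m [f hh]]]; by exists (m, f).
apply: (main hg (Mu := fun i => (sval (H' i)).1) (Fr := fun i => (sval (H' i)).2) Sinj).
- by move=> i; case: (H i).
- by move=> i; case: (H i) => _ [].
- by move=> i; case: (svalP (H' i)).
- by move=> i; case: (svalP (H' i)).
- by move=> i; case: (svalP (H' i)).
Qed.
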